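(* Let $d\geq 2$ and $1\leq d_1<d$ be integers, let $\mathbb{T}$ be the rooted $d$-ary tree and $\tilde{\mathbb{T}}$ its left-most $d_1$-regular subtree with the same root. Assign potential $u\in\mathbb{R}$ to every vertex of $\tilde{\mathbb{T}}$ other than the root and potential $0$ to every vertex of $\mathbb{T}\setminus\tilde{\mathbb{T}}$. For $\beta\geq 0$ let \[Z^{Det}_n(\beta,u)=\sum_{W}\exp\Big(\beta \sum_{y\in W\setminus\{\mathbf 0\}} U(y)\Big),\] where the sum is over all directed paths $W$ from the root $\mathbf 0$ to a vertex of generation $n$, and $U(y)$ is the potential of $y$. Then for any $\beta\geq 0$ and $u\in\mathbb{R}$, the limit $f^{Det}(\beta,u):=\lim_{n\to\infty}\frac1n\log Z^{Det}_n(\beta,u)$ exists and \[ f^{Det}(\beta,u)=\max\{\beta u+\log d_1,\ \log d\},\] and hence the critical curve $u^{Det}_c(\beta):=\inf\{u\in\mathbb{R}: f^{Det}(\beta,u)>\log d\}$ equals \[ u^{Det}_c(\beta)=\frac{\log(d/d_1)}{\beta}.\]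
   Context: The nodes of the rooted $d$-ary tree $\mathbb{T}$ are labeled $(k,j)$, $k\geq 0$ the generation and $1\leq j\leq d^k$; the root is $\mathbf 0=(0,1)$, and the offspring of $(k,j)$ are $(k+1,(j-1)d+\ell)$, $1\leq \ell\leq d$. The left-most $d_1$-regular subtree $\tilde{\mathbb{T}}$ contains the root, and for each $x=(k,j)\in\tilde{\mathbb{T}}$ its children in $\tilde{\mathbb{T}}$ are $(k+1,d(j-1)+\ell)$ for $1\leq \ell\leq d_1$. A directed path from the root to generation $n$ is a sequence $\mathbf 0=w(0),w(1),\dots,w(n)$ with each $w(m+1)$ a child of $w(m)$. *)

(* Defs.v *)
From Stdlib Require Import Reals List Arith Lia.
From Coquelicot Require Import Coquelicot.
Import ListNotations.
Open Scope R_scope.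

(* Nodes of the rooted d-ary tree: (k, j), k the generation, 1 <= j <= d^k. *)
Definition node := (nat * nat)%type.
Definition root : node := (0%nat, 1%nat).

Definition children (d : nat) (x : node) : list node :=
  map (fun l => (S (fst x), ((snd x - 1) * d + l)%nat)) (seq 1 d).

Fixpoint paths (d : nat) (n : nat) : list (list node) :=
  match n with
  | O => [[root]]
  | S n' => flat_map (fun p => map (fun c => p ++ [c]) (children d (last p root)))
                     (paths d n')
  end.

(* Membership in the left-most d1-regular subtree: the root is in it, and
   (k+1, d(j-1)+l) is in it iff (k,j) is in it and 1 <= l <= d1. *)
Fixpoint inTt (d d1 : nat) (k j : nat) : bool :=
  match k with
  | O => Nat.eqb j 1
  | S k' => andb (inTt d d1 k' ((j - 1) / d + 1))
                 (Nat.leb ((j - 1) mod d + 1) d1)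
  end.

Definition U (d d1 : nat) (u : R) (y : node) : R :=
  if Nat.eqb (fst y) 0 then 0
  else if inTt d d1 (fst y) (snd y) then u else 0.

Definition sumR (l : list R) : R := fold_right Rplus 0 l.

Definition ZDet (d d1 : nat) (beta u : R) (n : nat) : R :=
  sumR (map (fun W => exp (beta * sumR (map (U d d1 u) (tl W)))) (paths d n)).

Definition fDet (d d1 : nat) (beta u : R) : R :=
  real (Lim_seq (fun n => ln (ZDet d d1 beta u n) / INR n)).

Definition ucDet (d d1 : nat) (beta : R) : Rbar :=
  Glb_Rbar (fun u => fDet d d1 beta u > ln (INR d)).

(* Main.v *)
Require Import Defs.
From Stdlib Require Import Reals List Arith Lia Lra.
From Coquelicot Require Import Coquelicot.
Import ListNotations.
Open Scope R_scope.


Lemma sumR_app l1 l2 : sumR (l1 ++ l2) = sumR l1 + sumR l2.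
Proof. induction l1; simpl; [lra|]. rewrite IHl1; lra. Qed.

Lemma sumR_const {A} (g : A -> R) (s : list A) c :
  (forall x, In x s -> g x = c) -> sumR (map g s) = INR (length s) * c.
Proof.
  induction s as [|a s IH]; intros H; simpl; [lra|].
  rewrite H by (left; auto). rewrite IH by (intros; apply H; right; auto).
  destruct (length s); simpl; lra.
Qed.

Lemma sumR_scal {A} (g : A -> R) (s : list A) c :
  sumR (map (fun x => c * g x) s) = c * sumR (map g s).
Proof. induction s; simpl; [lra|]. rewrite IHs; lra. Qed.

Lemma sumR_plus {A} (f g : A -> R) (s : list A) :
  sumR (map (fun x => f x + g x) s) = sumR (map f s) + sumR (map g s).
Proof. induction s; simpl; [lra|]. rewrite IHs; lra. Qed.

Lemma sumR_ext {A} (f g : A -> R) (s : list A) :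
  (forall x, In x s -> f x = g x) -> sumR (map f s) = sumR (map g s).
Proof. intros H; f_equal; apply map_ext_in; auto. Qed.

Definition wt d d1 beta u (p : list node) := exp (beta * sumR (map (U d d1 u) (tl p))).
Definition SS d d1 beta u (P : list (list node)) (f : node -> R) :=
  sumR (map (fun p => wt d d1 beta u p * f (last p root)) P).

Lemma paths_inv d n p : In p (paths d n) -> p <> [] /\ (1 <= snd (last p root))%nat.
Proof.
  revert p; induction n; intros p Hp; simpl in Hp.
  - destruct Hp as [<-|[]]. split; [discriminate|unfold root; simpl; lia].
  - apply in_flat_map in Hp as [q [Hq Hp]].
    apply in_map_iff in Hp as [c [<- Hc]].
    unfold children in Hc. apply in_map_iff in Hc as [l [<- Hl]].
    apply in_seq in Hl.
    split. { destruct q; discriminate. }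
    rewrite last_last. simpl. pose proof (Nat.le_0_l ((snd (last q root) - 1) * d)); lia.
Qed.

Lemma wt_snoc d d1 beta u p c : p <> [] ->
  wt d d1 beta u (p ++ [c]) = wt d d1 beta u p * exp (beta * U d d1 u c).
Proof.
  intros Hp. destruct p as [|x p]; [congruence|]. unfold wt. simpl.
  rewrite map_app, sumR_app, <- exp_plus. simpl. f_equal. lra.
Qed.

Lemma SS_step d d1 beta u n f :
  SS d d1 beta u (paths d (S n)) f =
  SS d d1 beta u (paths d n)
     (fun x => sumR (map (fun c => exp (beta * U d d1 u c) * f c) (children d x))).
Proof.
  unfold SS. simpl. assert (Hinv := paths_inv d n).
  induction (paths d n) as [|p P IH]; simpl; [reflexivity|].
  rewrite map_app, sumR_app, IH by (intros; apply Hinv; right; auto).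
  f_equal. rewrite map_map. rewrite <- sumR_scal. apply sumR_ext.
  intros c _. rewrite last_last, wt_snoc by (apply Hinv; left; auto). lra.
Qed.

Lemma SS_ext d d1 beta u n f g :
  (forall x, (1 <= snd x)%nat -> f x = g x) ->
  SS d d1 beta u (paths d n) f = SS d d1 beta u (paths d n) g.
Proof.
  intros H. unfold SS. apply sumR_ext. intros p Hp.
  rewrite H; auto. apply (paths_inv d n p Hp).
Qed.

Definition Ifn d d1 (x : node) : R := if inTt d d1 (fst x) (snd x) then 1 else 0.
Definition Jfn d d1 (x : node) : R := if inTt d d1 (fst x) (snd x) then 0 else 1.

Lemma child_in d d1 k j l : (2 <= d)%nat -> (1 <= j)%nat -> (1 <= l <= d)%nat ->
  inTt d d1 (S k) ((j - 1) * d + l) = andb (inTt d d1 k j) (Nat.leb l d1).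
Proof.
  intros Hd Hj Hl. simpl.
  assert (E : ((j - 1) * d + l - 1 = (l - 1) + (j - 1) * d)%nat).
  { pose proof (Nat.le_0_l ((j - 1) * d)). lia. }
  rewrite E.
  rewrite Nat.div_add, Nat.Div0.mod_add by lia.
  rewrite Nat.div_small, Nat.mod_small by lia.
  replace (0 + (j - 1) + 1)%nat with j by lia.
  replace (l - 1 + 1)%nat with l by lia. reflexivity.
Qed.

Lemma sum_children d d1 (F : node -> R) (x : node) A B :
  (2 <= d)%nat -> (d1 < d)%nat -> (1 <= snd x)%nat ->
  (forall l, (1 <= l <= d)%nat -> F (S (fst x), (snd x - 1) * d + l)%nat =
      if Nat.leb l d1 then A else B) ->
  sumR (map F (children d x)) = INR d1 * A + INR (d - d1) * B.
Proof.
  intros Hd Hd1 Hj H. unfold children. rewrite map_map.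
  replace (seq 1 d) with (seq 1 (d1 + (d - d1))) by (f_equal; lia).
  rewrite seq_app, map_app, sumR_app.
  rewrite (sumR_const _ _ A), (sumR_const _ _ B), !length_seq; auto.
  - intros l Hl. apply in_seq in Hl. rewrite H by lia.
    destruct (Nat.leb_spec l d1); auto; lia.
  - intros l Hl. apply in_seq in Hl. rewrite H by lia.
    destruct (Nat.leb_spec l d1); auto; lia.
Qed.

Lemma SS_lin d d1 beta u P f g a c :
  SS d d1 beta u P (fun x => a * f x + c * g x) = a * SS d d1 beta u P f + c * SS d d1 beta u P g.
Proof.
  unfold SS. induction P; simpl; [lra|]. rewrite IHP. ring.
Qed.

Definition An d d1 beta u n := SS d d1 beta u (paths d n) (Ifn d d1).
Definition Bn d d1 beta u n := SS d d1 beta u (paths d n) (Jfn d d1).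

Lemma A0 d d1 beta u : An d d1 beta u 0 = 1.
Proof. unfold An, SS, wt, Ifn. simpl. rewrite Rmult_0_r, exp_0. lra. Qed.
Lemma B0 d d1 beta u : Bn d d1 beta u 0 = 0.
Proof. unfold Bn, SS, wt, Jfn. simpl. lra. Qed.

Lemma AS d d1 beta u n : (2 <= d)%nat -> (d1 < d)%nat ->
  An d d1 beta u (S n) = (INR d1 * exp (beta * u)) * An d d1 beta u n.
Proof.
  intros Hd Hd1. unfold An. rewrite SS_step.
  rewrite (SS_ext _ _ _ _ _ _ (fun x => (INR d1 * exp (beta * u)) * Ifn d d1 x + 0 * Ifn d d1 x)).
  { rewrite SS_lin. ring. }
  intros [k j] Hj. simpl in Hj.
  rewrite (sum_children d d1 _ (k, j) (Ifn d d1 (k,j) * exp (beta * u)) 0); auto.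
  - rewrite Rmult_0_r, Rplus_0_r. ring.
  - intros l Hl. unfold U, Ifn. simpl fst; simpl snd.
    change (Nat.eqb (S k) 0) with false. cbv iota.
    rewrite child_in by auto.
    destruct (inTt d d1 k j), (Nat.leb l d1); simpl; rewrite ?Rmult_0_r, ?exp_0; ring.
Qed.

Lemma BS d d1 beta u n : (2 <= d)%nat -> (d1 < d)%nat ->
  Bn d d1 beta u (S n) = INR d * Bn d d1 beta u n + INR (d - d1) * An d d1 beta u n.
Proof.
  intros Hd Hd1. unfold An, Bn. rewrite SS_step.
  rewrite (SS_ext _ _ _ _ _ _ (fun x => INR d * Jfn d d1 x + INR (d - d1) * Ifn d d1 x)).
  { rewrite SS_lin. ring. }
  intros [k j] Hj. simpl in Hj.
  rewrite (sum_children d d1 _ (k, j) (Jfn d d1 (k,j)) 1); auto.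
  - unfold Jfn, Ifn. simpl. rewrite minus_INR by lia.
    destruct (inTt d d1 k j); ring.
  - intros l Hl. unfold U, Jfn. simpl fst; simpl snd.
    change (Nat.eqb (S k) 0) with false. cbv iota.
    rewrite child_in by auto.
    destruct (inTt d d1 k j), (Nat.leb l d1); simpl; rewrite ?Rmult_0_r, ?exp_0; ring.
Qed.

Lemma Z_AB d d1 beta u n : ZDet d d1 beta u n = An d d1 beta u n + Bn d d1 beta u n.
Proof.
  unfold ZDet, An, Bn, SS. induction (paths d n); simpl; [lra|].
  rewrite IHl. unfold wt, Ifn, Jfn. destruct inTt; ring.
Qed.


Lemma ln_Rmax x y : 0 < x -> 0 < y -> ln (Rmax x y) = Rmax (ln x) (ln y).
Proof.
  intros Hx Hy. unfold Rmax.
  destruct (Rle_dec x y), (Rle_dec (ln x) (ln y)); auto.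
  - exfalso. apply n. apply ln_le; auto.
  - exfalso. assert (ln y < ln x) by (apply ln_increasing; lra). lra.
Qed.

Lemma lim_c_div c : is_lim_seq (fun n => c / INR n) 0.
Proof.
  assert (H := is_lim_seq_inv _ _ is_lim_seq_INR).
  assert (H2 := is_lim_seq_scal_l _ c _ (H ltac:(discriminate))).
  simpl in H2. rewrite Rmult_0_r in H2. exact H2.
Qed.

Lemma lim_ln_div : is_lim_seq (fun n => ln (INR n) / INR n) 0.
Proof.
  apply (is_lim_comp_seq (fun y => ln y / y) INR p_infty 0).
  - apply is_lim_div_ln_p.
  - exists 0%nat. intros; discriminate.
  - apply is_lim_seq_INR.
Qed.

Section Bounds.
Variables (d d1 : nat) (beta u : R).
Hypotheses (Hd : (2 <= d)%nat) (Hd1 : (1 <= d1)%nat) (Hdd : (d1 < d)%nat).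
Let a := INR d1 * exp (beta * u).
Let M := Rmax a (INR d).

Lemma a_pos : 0 < a.
Proof. unfold a. apply Rmult_lt_0_compat; [apply lt_0_INR; lia| apply exp_pos]. Qed.
Lemma d_ge2 : 2 <= INR d.
Proof. apply (le_INR 2). lia. Qed.
Lemma dd1 : 1 <= INR (d - d1).
Proof. apply (le_INR 1). lia. Qed.

Lemma An_pow n : An d d1 beta u n = a ^ n.
Proof. induction n; [apply A0|]. rewrite AS by lia. rewrite IHn. simpl. reflexivity. Qed.

Lemma Bn_nonneg n : 0 <= Bn d d1 beta u n.
Proof.
  induction n; [rewrite B0; lra|]. rewrite BS, An_pow by lia.
  pose proof d_ge2; pose proof dd1; pose proof (pow_le a n (Rlt_le _ _ a_pos)).
  nra.
Qed.

Lemma Bn_low n : INR d ^ n <= Bn d d1 beta u (S n).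
Proof.
  induction n.
  - rewrite BS, B0, A0 by lia. pose proof dd1. simpl. lra.
  - rewrite BS, An_pow by lia. pose proof d_ge2; pose proof dd1; pose proof (pow_le a (S n) (Rlt_le _ _ a_pos)).
    assert (0 <= INR (d - d1) * a ^ S n) by (apply Rmult_le_pos; lra).
    assert (INR d * INR d ^ n <= INR d * Bn d d1 beta u (S n)) by (apply Rmult_le_compat_l; lra).
    simpl pow. simpl pow in H2. lra.
Qed.

Lemma Bn_up n : Bn d d1 beta u n <= INR n * M ^ n.
Proof.
  assert (Ha : a <= M) by apply Rmax_l. assert (HdM : INR d <= M) by apply Rmax_r.
  pose proof a_pos. pose proof d_ge2. pose proof dd1.
  assert (Hdd' : INR (d - d1) <= INR d) by (apply le_INR; lia).
  induction n.
  - rewrite B0. simpl. lra.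
  - rewrite BS, An_pow by lia. rewrite S_INR. simpl.
    assert (0 <= a ^ n) by (apply pow_le; lra).
    assert (a ^ n <= M ^ n) by (apply pow_incr; lra).
    assert (0 <= M ^ n) by (apply pow_le; lra).
    assert (0 <= INR n) by apply pos_INR.
    assert (INR d * Bn d d1 beta u n <= M * (INR n * M ^ n)).
    { apply Rmult_le_compat; auto; try lra. apply Bn_nonneg. }
    assert (INR (d - d1) * a ^ n <= M * M ^ n).
    { apply Rmult_le_compat; lra. }
    lra.
Qed.

Lemma Z_low n : M ^ n <= INR d * ZDet d d1 beta u n.
Proof.
  rewrite Z_AB, An_pow. pose proof a_pos. pose proof d_ge2.
  assert (0 <= a ^ n) by (apply pow_le; lra).
  unfold M, Rmax. destruct (Rle_dec a (INR d)).
  - destruct n.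
    + simpl. rewrite B0. lra.
    + pose proof (Bn_low n).
      assert (0 <= INR d * a ^ S n) by (apply Rmult_le_pos; lra).
      assert (INR d * INR d ^ n <= INR d * Bn d d1 beta u (S n)) by (apply Rmult_le_compat_l; lra).
      simpl pow. simpl pow in H3. lra.
  - pose proof (Bn_nonneg n).
    assert (a ^ n <= INR d * a ^ n) by (pose proof (Rmult_le_compat_r (a ^ n) 1 (INR d)); lra).
    assert (0 <= INR d * Bn d d1 beta u n) by (apply Rmult_le_pos; lra).
    lra.
Qed.

Lemma Z_up n : ZDet d d1 beta u n <= (INR n + 1) * M ^ n.
Proof.
  rewrite Z_AB, An_pow. pose proof (Bn_up n).
  assert (a ^ n <= M ^ n) by (apply pow_incr; pose proof a_pos; split; [lra|apply Rmax_l]).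
  lra.
Qed.

Lemma M_pos : 0 < M.
Proof. pose proof d_ge2. pose proof (Rmax_r a (INR d)). unfold M. lra. Qed.

Lemma Z_pos n : 0 < ZDet d d1 beta u n.
Proof.
  pose proof (Z_low n). pose proof (pow_lt M n M_pos). pose proof d_ge2. nra.
Qed.

Lemma lim_main : is_lim_seq (fun n => ln (ZDet d d1 beta u n) / INR n) (ln M).
Proof.
  apply (is_lim_seq_le_le_loc (fun n => ln M - ln (INR d) / INR n) _
           (fun n => ln M + (ln 2 / INR n + ln (INR n) / INR n))).
  - exists 1%nat. intros n Hn.
    assert (Hn' : 1 <= INR n) by (apply (le_INR 1); lia).
    pose proof M_pos. pose proof d_ge2. pose proof (Z_pos n).
    assert (HM : 0 < M ^ n) by (apply pow_lt; lra).
    split.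
    + apply (Rmult_le_reg_r (INR n)); [lra|].
      unfold Rdiv. rewrite Rmult_minus_distr_r, Rmult_assoc, Rinv_l, Rmult_1_r, Rmult_assoc, Rinv_l by lra.
      rewrite Rmult_1_r.
      assert (HL : ln (M ^ n) <= ln (INR d * ZDet d d1 beta u n)) by (apply ln_le; auto; apply Z_low).
      rewrite ln_pow, ln_mult in HL by lra. lra.
    + apply (Rmult_le_reg_r (INR n)); [lra|].
      unfold Rdiv. rewrite !Rmult_plus_distr_r, !Rmult_assoc, !Rinv_l by lra.
      rewrite !Rmult_1_r.
      assert (HL : ln (ZDet d d1 beta u n) <= ln ((INR n + 1) * M ^ n)) by (apply ln_le; auto; apply Z_up).
      rewrite ln_mult, ln_pow in HL by lra.
      assert (HL2 : ln (INR n + 1) <= ln (2 * INR n)) by (apply ln_le; lra).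
      rewrite ln_mult in HL2 by lra. lra.
  - assert (H := is_lim_seq_minus' _ _ _ _ (is_lim_seq_const (ln M)) (lim_c_div (ln (INR d)))).
    rewrite Rminus_0_r in H. exact H.
  - assert (H := is_lim_seq_plus' _ _ _ _ (is_lim_seq_const (ln M))
       (is_lim_seq_plus' _ _ _ _ (lim_c_div (ln 2)) lim_ln_div)).
    rewrite !Rplus_0_r in H. exact H.
Qed.

Lemma lnM : ln M = Rmax (beta * u + ln (INR d1)) (ln (INR d)).
Proof.
  pose proof d_ge2. unfold M. rewrite ln_Rmax; [|apply a_pos|lra].
  unfold a. rewrite ln_mult, ln_exp; [|apply lt_0_INR; lia|apply exp_pos].
  rewrite Rplus_comm. reflexivity.
Qed.

End Bounds.

Lemma part1 d d1 beta u : (2 <= d)%nat -> (1 <= d1)%nat -> (d1 < d)%nat ->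
  is_lim_seq (fun n => ln (ZDet d d1 beta u n) / INR n)
             (Rmax (beta * u + ln (INR d1)) (ln (INR d))).
Proof. intros. rewrite <- lnM by auto. apply lim_main; auto. Qed.


Lemma fDet_eq d d1 beta u : (2 <= d)%nat -> (1 <= d1)%nat -> (d1 < d)%nat ->
  fDet d d1 beta u = Rmax (beta * u + ln (INR d1)) (ln (INR d)).
Proof.
  intros. unfold fDet. rewrite (is_lim_seq_unique _ _ (part1 d d1 beta u H H0 H1)). reflexivity.
Qed.

Lemma Rmax_gt x y : Rmax x y > y <-> x > y.
Proof. unfold Rmax. destruct (Rle_dec x y); split; intros; lra. Qed.

Lemma glb_ray (E : R -> Prop) c : (forall u, E u <-> u > c) -> Glb_Rbar E = Finite c.
Proof.
  intros HE. apply is_glb_Rbar_unique. split.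
  - intros x Hx. apply HE in Hx. simpl. lra.
  - intros b Hb. destruct b as [r| |]; simpl; auto.
    + destruct (Rle_dec r c) as [|Hn]; auto. exfalso.
      assert (E ((c + r) / 2)) by (apply HE; lra).
      specialize (Hb _ H). simpl in Hb. lra.
    + assert (E (c + 1)) by (apply HE; lra). specialize (Hb _ H). simpl in Hb. auto.
Qed.

Lemma glb_empty (E : R -> Prop) : (forall u, ~ E u) -> Glb_Rbar E = p_infty.
Proof.
  intros HE. apply is_glb_Rbar_unique. split.
  - intros x Hx. exfalso; eapply HE; eauto.
  - intros b Hb. destruct b; simpl; auto.
Qed.

Theorem theorem1p1 (d d1 : nat) :
  (2 <= d)%nat -> (1 <= d1)%nat -> (d1 < d)%nat ->
  (forall beta u : R, 0 <= beta ->
     is_lim_seq (fun n => ln (ZDet d d1 beta u n) / INR n)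
                (Rmax (beta * u + ln (INR d1)) (ln (INR d))))
  /\ (forall beta : R, 0 < beta ->
        ucDet d d1 beta = Finite (ln (INR d / INR d1) / beta))
  /\ ucDet d d1 0 = p_infty.
Proof.
  intros Hd Hd1 Hdd.
  assert (Hd1p : 0 < INR d1) by (apply lt_0_INR; lia).
  assert (Hdp : 0 < INR d) by (apply lt_0_INR; lia).
  split; [|split].
  - intros beta u _. apply part1; auto.
  - intros beta Hb. unfold ucDet. apply glb_ray. intros u.
    rewrite fDet_eq, Rmax_gt by auto. rewrite ln_div by auto.
    split; intros H.
    + apply (Rmult_lt_reg_r beta); auto. unfold Rdiv. rewrite Rmult_assoc, Rinv_l by lra. lra.
    + apply (Rmult_lt_compat_r beta) in H; auto. unfold Rdiv in H.
      rewrite Rmult_assoc, Rinv_l in H by lra. lra.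
  - unfold ucDet. apply glb_empty. intros u.
    rewrite fDet_eq, Rmax_gt by auto. rewrite Rmult_0_l, Rplus_0_l.
    assert (ln (INR d1) < ln (INR d)) by (apply ln_increasing; auto; apply lt_INR; auto).
    lra.
Qed.
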